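(* Let $\kappa$ be a regular uncountable cardinal and let $\mathscr{U},\mathscr{V}$ be ultrafilters over $\kappa$ such that $\mathscr{U}\leq_{\mathrm{RK}}\mathscr{V}$. If $\mathrm{Gal}(\mathscr{V},\kappa,\kappa^+)$ holds, then $\mathrm{Gal}(\mathscr{U},\kappa,\kappa^+)$ holds.
   Context: For a regular uncountable cardinal $\kappa$, a cardinal $\lambda$ and a filter $\mathscr{F}$ over $\kappa$, $\mathrm{Gal}(\mathscr{F},\kappa,\lambda)$ (Galvin's property) means: every sequence $\langle A_\alpha\mid \alpha<\lambda\rangle$ of members of $\mathscr{F}$ admits a subsequence $\langle A_{\alpha_\beta}\mid \beta<\kappa\rangle$ (i.e. a set of $\kappa$ many indices) with $\bigcap_{\beta<\kappa}A_{\alpha_\beta}\in\mathscr{F}$. $\mathscr{U}\leq_{\mathrm{RK}}\mathscr{V}$ (Rudin–Keisler) means there is $f\colon\kappa\to\kappa$ such that for every $X\subseteq\kappa$, $X\in\mathscr{U}$ iff $f^{-1}[X]\in\mathscr{V}$. *)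

(* Defs.v *)
From HB Require Import structures.
From mathcomp Require Import all_boot all_order.
From mathcomp Require Import boolp classical_sets functions cardinality filter.
Set Implicit Arguments. Unset Strict Implicit. Unset Printing Implicit Defensive.
Local Open Scope classical_set_scope.
Local Open Scope card_scope.

(* The cardinal kappa is represented by a type K (its elements = kappa);
   everything below depends only on the cardinality of K. *)

Definition card_lt T U (A : set T) (B : set U) := A #<= B /\ ~ (B #<= A).

(* Index sets of size < |K| are represented by subsets J of K. *)
Definition regular_uncountable (K : Type) :=
  ~ countable [set: K] /\
  forall (J : set K) (A : K -> set K),
    card_lt J [set: K] -> (forall j, J j -> card_lt (A j) [set: K]) ->
    card_lt (\bigcup_(j in J) A j) [set: K].

Definition is_succ_card (K L : Type) :=
  card_lt [set: K] [set: L] /\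
  forall S : set L, S #<= [set: K] \/ S #= [set: L].

(* Galvin's property Gal(F, kappa, lambda), lambda represented by the type L:
   every L-sequence of members of F has kappa many indices whose
   intersection is in F. *)
Definition Galvin (K L : Type) (F : set_system K) :=
  forall A : L -> set K, (forall a, F (A a)) ->
    exists I : set L, I #= [set: K] /\ F (\bigcap_(a in I) A a).

Definition RK_le (K : Type) (U V : set_system K) :=
  exists f : K -> K, forall X : set K, U X <-> V (f @^-1` X).

(* Main.v *)
Require Import Defs.
From mathcomp Require Import all_boot all_order.
From mathcomp Require Import boolp classical_sets functions cardinality filter.

Local Open Scope classical_set_scope.

Theorem lemma2p1 (K L : Type) (U V : set_system K) :
  regular_uncountable K -> is_succ_card K L ->
  UltraFilter U -> UltraFilter V -> RK_le U V ->
  Galvin L V -> Galvin L U.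
Proof.
move=> _ _ _ _ [f Hf] GV A HA.
have [I [HI HV]] := GV (fun a => f @^-1` A a) (fun a => (Hf (A a)).1 (HA a)).
exists I; split => //.
apply/(Hf _).2.
have -> : f @^-1` (\bigcap_(a in I) A a) = \bigcap_(a in I) (f @^-1` A a).
  by apply/seteqP; split => x /= H a Ia; apply: H.
exact: HV.
Qed.
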